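(* Let $\varphi(x)=\sum_{i\ge0}\gamma_ix^i\in\mathbb{K}[[x]]$, let $r\in\mathbb{Z}$, and stipulate $\gamma_i=0$ for $i<0$. Then $\varphi\in\mathcal{F}_r$ if and only if the following hold. If $r=2k$ is even: for each $n\ge\max\{0,-k\}$, $$\gamma_{2n+1}=\sum_{i=-k}^n{n+k\brack i+k}\gamma_{2i},$$ and, if $k<0$, then for $0\le n\le -k-1$, $$\gamma_{2n+1}=\sum_{i=0}^n-{-k-i\brack -k-n}\gamma_{2i}.$$ If $r=2k+1$ is odd: for each $n\ge\max\{0,-k\}$, $$\gamma_{2n+1}=\sum_{i=-k}^n{n+k\brace i+k}\gamma_{2i},$$ and, if $k<0$, then for $0\le n\le -k-1$, $$\gamma_{2n+1}=\sum_{i=0}^n-{-k-i-1\brace -k-n-1}\gamma_{2i}.$$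
   Context: $\mathbb{K}\in\{\mathbb{Q},\mathbb{R},\mathbb{C}\}$. For $r\in\mathbb{Z}$, $\mathcal{F}_r$ denotes the space of $\varphi\in\mathbb{K}[[x]]$ with $\varphi(x/(x-1))=(1-x)^r\varphi(x)$. The Euler polynomials $E_n(x)$ are defined by $\frac{2e^{xt}}{e^t+1}=\sum_{n\ge0}E_n(x)\frac{t^n}{n!}$. For integers $N\ge0$, define ${N\brack j}$ by $\sum_{j=1}^N{N\brack j}x^{2j-1}=x^{2N}-E_{2N}(x)$ and ${N\brace j}$ by $\sum_{j=0}^N{N\brace j}x^{2j}=x^{2N+1}-E_{2N+1}(x)$ (negatives of the odd-degree coefficients of $E_{2N}$, resp. even-degree coefficients of $E_{2N+1}$); set ${N\brack j}=0$ for $j\le0$ or $j>N$, and ${N\brace j}=0$ for $j<0$ or $j>N$. *)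

(* Defs.v *)
From HB Require Import structures.
From mathcomp Require Import all_boot all_order all_algebra.
Set Implicit Arguments. Unset Strict Implicit. Unset Printing Implicit Defensive.
Import Order.TTheory GRing.Theory Num.Theory.
Local Open Scope ring_scope.

Section Defs.
Variable K : numFieldType.

Definition ps := nat -> K.

Definition ps_mul (f g : ps) : ps := fun n => \sum_(i < n.+1) f i * g (n - i)%N.
Definition ps_one : ps := fun n => (n == 0%N)%:R.
Definition ps_X : ps := fun n => (n == 1%N)%:R.
Definition ps_opp (f : ps) : ps := fun n => - f n.
Definition ps_exp (f : ps) (k : nat) : ps := iter k (ps_mul f) ps_one.

(* 1 - x and its inverse 1/(1-x) = sum_n x^n (geometric series). *)
Definition ps_1mX : ps := fun n => ps_one n - ps_X n.
Definition ps_geom : ps := fun _ => 1.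

Definition ps_1mX_pow (r : int) : ps :=
  match r with
  | Posz m => ps_exp ps_1mX m
  | Negz m => ps_exp ps_geom m.+1
  end.

(* x/(x-1) = - x * 1/(1-x). *)
Definition ps_xdiv : ps := ps_opp (ps_mul ps_X ps_geom).

(* Composition phi(g(x)) for g with zero constant term: the coefficient of
   x^n only involves the terms phi_i g^i with i <= n. *)
Definition ps_comp (phi g : ps) : ps :=
  fun n => \sum_(i < n.+1) phi i * ps_exp g i n.

Definition in_F (r : int) (phi : ps) : Prop :=
  forall n, ps_comp phi ps_xdiv n = ps_mul (ps_1mX_pow r) phi n.

(* Euler polynomials: coefficient comparison in
   2 e^{xt} = (e^t + 1) sum_n E_n(x) t^n/n!  gives
   sum_{k<=n} C(n,k) E_k(x) + E_n(x) = 2 x^n, i.e.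
   E_n = x^n - 1/2 sum_{k<n} C(n,k) E_k. *)
Fixpoint euler_list (n : nat) : seq {poly K} :=
  match n with
  | 0%N => [:: 1]
  | n'.+1 =>
      let l := euler_list n' in
      rcons l ('X^n - 2^-1 *: \sum_(k < n) ('C(n, k))%:R *: l`_k)
  end.
Definition euler_poly (n : nat) : {poly K} := (euler_list n)`_n.

Definition brack_poly (N : nat) : {poly K} := 'X^(N.*2) - euler_poly (N.*2).
Definition brace_poly (N : nat) : {poly K} := 'X^((N.*2).+1) - euler_poly ((N.*2).+1).

(* {N brack j}: sum_{j=1}^N {N brack j} x^(2j-1) = x^(2N) - E_(2N)(x),
   zero for j <= 0 or j > N (and for N < 0, which never occurs). *)
Definition ebrack (N j : int) : K :=
  match N with
  | Posz N' => if (1 <= j) && (j <= N'%:Z)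
               then let e : int := 2 * j - 1 in (brack_poly N')`_(absz e)
               else 0
  | Negz _ => 0
  end.

(* {N brace j}: sum_{j=0}^N {N brace j} x^(2j) = x^(2N+1) - E_(2N+1)(x),
   zero for j < 0 or j > N. *)
Definition ebrace (N j : int) : K :=
  match N with
  | Posz N' => if (0 <= j) && (j <= N'%:Z)
               then let e : int := 2 * j in (brace_poly N')`_(absz e)
               else 0
  | Negz _ => 0
  end.

Definition gZ (gam : ps) (i : int) : K :=
  match i with Posz m => gam m | Negz _ => 0 end.

Definition zsum (a b : int) (F : int -> K) : K :=
  if a <= b then \sum_(0 <= t < absz (b - a + 1)) F (a + t%:Z) else 0.

End Defs.

(* Main.v *)
Require Import Defs.
From HB Require Import structures.
From mathcomp Require Import all_boot all_order all_algebra.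
From mathcomp Require Import boolp ring lra zify.
Import Order.TTheory GRing.Theory Num.Theory.
Local Open Scope ring_scope.
Set Implicit Arguments. Unset Strict Implicit. Unset Printing Implicit Defensive.

Section PS.
Variable K : numFieldType.
Implicit Types f g h : ps K.

Definition ps_add f g : ps K := fun n => f n + g n.
Definition ps_zero : ps K := fun _ => 0.

Lemma ps_addA : associative ps_add.
Proof. by move=> f g h; apply/funext=> n; rewrite /ps_add addrA. Qed.
Lemma ps_addC : commutative ps_add.
Proof. by move=> f g; apply/funext=> n; rewrite /ps_add addrC. Qed.
Lemma ps_add0 : left_id ps_zero ps_add.
Proof. by move=> f; apply/funext=> n; rewrite /ps_add /ps_zero add0r. Qed.
Lemma ps_addN : left_inverse ps_zero (@ps_opp K) ps_add.
Proof. by move=> f; apply/funext=> n; rewrite /ps_add /ps_zero /ps_opp addNr. Qed.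

HB.instance Definition _ := gen_eqMixin (ps K).
HB.instance Definition _ := gen_choiceMixin (ps K).
HB.instance Definition _ := GRing.isZmodule.Build (ps K) ps_addA ps_addC ps_add0 ps_addN.

Definition trP (m : nat) f : {poly K} := \poly_(i < m.+1) f i.

Lemma ps_mulE m f g n : (n <= m)%N -> ps_mul f g n = (trP m f * trP m g)`_n.
Proof.
move=> nm; rewrite coefM /ps_mul; apply: eq_bigr => [[i /= hi]] _.
rewrite !coef_poly; have -> : (i < m.+1)%N by apply: leq_trans hi _.
by have -> : (n - i < m.+1)%N by rewrite ltnS (leq_trans (leq_subr _ _)).
Qed.

Lemma ps_mulC : commutative (@ps_mul K).
Proof. by move=> f g; apply/funext=> n; rewrite !(@ps_mulE n _ _ n (leqnn n)) mulrC. Qed.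

Lemma coef_trP m f i : (i <= m)%N -> (trP m f)`_i = f i.
Proof. by move=> h; rewrite coef_poly ltnS h. Qed.

Lemma ps_mul_def f g n : ps_mul f g n = \sum_(i < n.+1) f i * g (n - i)%N.
Proof. by []. Qed.

Lemma ps_mulA : associative (@ps_mul K).
Proof.
move=> f g h; apply/funext=> n.
transitivity ((trP n f * (trP n g * trP n h))`_n).
  rewrite coefM ps_mul_def; apply: eq_bigr => [[i /= hi]] _.
  by rewrite [in LHS](@ps_mulE n) ?leq_subr // coef_trP.
rewrite mulrA coefM ps_mul_def; apply: eq_bigr => [[i /= hi]] _.
by rewrite (@ps_mulE n) // coef_trP // leq_subr.
Qed.

Lemma ps_mulDl : left_distributive (@ps_mul K) ps_add.
Proof.
move=> f g h; apply/funext=> n; rewrite /ps_add !ps_mul_def -big_split /=.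
by apply: eq_bigr => i _; rewrite mulrDl.
Qed.

Lemma ps_mul1 : left_id (@ps_one K) (@ps_mul K).
Proof.
move=> f; apply/funext=> n; rewrite ps_mul_def big_ord_recl /= /ps_one /= mul1r subn0.
by rewrite big1 ?addr0 // => i _; rewrite mul0r.
Qed.

Lemma ps_one_neq0 : ps_one K != 0.
Proof.
apply/eqP => h; have := congr1 (fun f : ps K => f 0%N) h.
by rewrite /ps_one /= => /eqP; rewrite oner_eq0.
Qed.

HB.instance Definition _ := GRing.Zmodule_isComNzRing.Build (ps K)
  ps_mulA ps_mulC ps_mul1 ps_mulDl ps_one_neq0.

Lemma psmulE f g : f * g = ps_mul f g. Proof. by []. Qed.
Lemma psoneE : 1 = ps_one K. Proof. by []. Qed.
Lemma psaddE f g n : (f + g) n = f n + g n. Proof. by []. Qed.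
Lemma psexpE f k : ps_exp f k = f ^+ k.
Proof. by elim: k => // k IH; rewrite exprS -IH. Qed.
Lemma sum_shift (F : nat -> K) j n : (j <= n)%N -> (forall k, (k < j)%N -> F k = 0) ->
  \sum_(k < n) F k = \sum_(l < n - j) F (j + l)%N.
Proof.
move=> jn F0; rewrite -!(big_mkord xpredT) (@big_cat_nat _ _ _ j) //=.
rewrite big_nat big1 ?add0r; last by move=> k /andP [_ /F0].
rewrite -{1}[j]add0n big_addn big_mkord; apply: eq_bigr => i _; by rewrite addnC.
Qed.

Lemma binA (n k j : nat) : (j <= k)%N -> (k <= n)%N ->
  ('C(n, k) * 'C(k, j) = 'C(n, j) * 'C(n - j, k - j))%N.
Proof.
move=> jk kn.
have H1 := bin_fact kn. have H2 := bin_fact jk.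
have jn : (j <= n)%N by apply: leq_trans kn.
have H3 := bin_fact jn.
have kjn : (k - j <= n - j)%N by rewrite leq_sub2r.
have H4 := bin_fact kjn.
have e : (n - j - (k - j) = n - k)%N by rewrite subnBA // subnK // (leq_trans jk).
rewrite e in H4.
have P : (0 < j`! * (k - j)`! * (n - k)`!)%N by rewrite !muln_gt0 !fact_gt0.
apply/eqP; rewrite -(eqn_pmul2r P); apply/eqP.
transitivity n`!.
  by rewrite -H1 -H2 !mulnA; congr (_ * _); rewrite -!mulnA; congr (_ * _); rewrite mulnC.
rewrite -H3 -H4.
rewrite !mulnA; congr (_ * _); rewrite -!mulnA; congr (_ * _); rewrite mulnCA; congr (_ * _).
Qed.

Definition ec (n j : nat) : K := (euler_poly K n)`_j.
Definition en (m : nat) : K := ec m 0.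

Lemma size_euler_list n : size (euler_list K n) = n.+1.
Proof. by elim: n => // n IH; rewrite /= size_rcons IH. Qed.

Lemma nth_euler_list n k : (k <= n)%N -> (euler_list K n)`_k = euler_poly K k.
Proof.
elim: n => [|n IH]; first by rewrite leqn0 => /eqP ->.
rewrite leq_eqVlt => /orP [/eqP -> //|].
rewrite ltnS => kn; rewrite /= nth_rcons size_euler_list ltnS kn.
exact: IH.
Qed.

Lemma euler_polyS n : euler_poly K n.+1 = 'X^(n.+1) -
   2^-1 *: \sum_(k < n.+1) ('C(n.+1, k))%:R *: euler_poly K k.
Proof.
rewrite /euler_poly /= nth_rcons size_euler_list ltnn eqxx.
congr (_ - 2^-1 *: _); apply: eq_bigr => [[k hk]] _ /=.
by rewrite nth_euler_list.
Qed.

Lemma ecS n j : ec n.+1 j = (j == n.+1)%:R -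
   2^-1 * \sum_(k < n.+1) 'C(n.+1, k)%:R * ec k j.
Proof.
rewrite /ec euler_polyS coefB coefXn coefZ coef_sum; congr (_ - _ * _).
by apply: eq_bigr => k _; rewrite coefZ.
Qed.

Lemma ec0 j : ec 0 j = (j == 0)%:R.
Proof. by rewrite /ec /euler_poly /= coef1. Qed.

Lemma en0 : en 0 = 1.
Proof. by rewrite /en ec0. Qed.

Lemma enS m : en m.+1 = - (2^-1 * \sum_(k < m.+1) 'C(m.+1, k)%:R * en k).
Proof. by rewrite /en ecS add0r. Qed.

Lemma en_rec m : \sum_(k < m.+1) 'C(m, k)%:R * en k + en m = 2 * (m == 0)%:R.
Proof.
case: m => [|m]; first by rewrite big_ord1 bin0 mul1r en0 mulr1.
rewrite big_ord_recr /= binn mul1r enS mulr0.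
set S := \sum_(_ < _) _.
have h2 : (2 : K) != 0 by rewrite pnatr_eq0.
field.
by [].
Qed.

Lemma ecE n j : ec n j = 'C(n, j)%:R * en (n - j).
Proof.
elim/ltn_ind: n j => n IH j.
case: n IH => [|n] IH.
  case: j => [|j]; first by rewrite /en bin0 mul1r.
  by rewrite ec0 bin0n mul0r.
rewrite ecS.
have [jn|nj] := leqP j n; last first.
  rewrite [X in _ - _ * X]big1 ?mulr0 ?subr0; last first.
    move=> [k hk] _ /=; rewrite IH // (@bin_small k j) ?mul0r ?mulr0 //.
    exact: leq_trans hk nj.
  case: (ltngtP j n.+1) nj => // [jn1 _|-> _]; first by rewrite bin_small ?mul0r.
  by rewrite binn subnn en0 mulr1.
rewrite (ltn_eqF (leq_ltn_trans jn (ltnSn n))) sub0r subSn // enS.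
rewrite (@sum_shift (fun k => 'C(n.+1, k)%:R * ec k j) j n.+1) ?(leq_trans jn) //; last first.
  by move=> k kj; rewrite IH ?(@bin_small k j) ?mul0r ?mulr0 // ltnS (leq_trans (ltnW kj) jn).
rewrite subSn // mulrN; congr (- _); rewrite mulrCA; congr (_ * _).
rewrite mulr_sumr; apply: eq_bigr => [[l hl]] _ /=.
have hjl : (j + l <= n)%N by move: hl; rewrite ltnS; lia.
rewrite IH ?ltnS // addKn.
rewrite mulrA -natrM binA ?leq_addr ?(leq_trans hjl) // addKn natrM mulrA subSn //.
Qed.


Lemma factK_neq0 n : (n`!%:R : K) != 0.
Proof. by rewrite pnatr_eq0 -lt0n fact_gt0. Qed.

Lemma fact_splitK n i : (i <= n)%N ->
  (i`!%:R)^-1 * ((n - i)`!%:R)^-1 = 'C(n, i)%:R / n`!%:R :> K.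
Proof.
move=> h; have := bin_fact h; move/(congr1 (fun m => m%:R : K)); rewrite !natrM => e.
rewrite -e; have := factK_neq0 i; have := factK_neq0 (n - i) => h1 h2.
have h3 : 'C(n,i)%:R != 0 :> K by rewrite pnatr_eq0 -lt0n bin_gt0.
by rewrite invfM mulrA divff // mul1r invfM.
Qed.

Definition egf (a : nat -> K) : ps K := fun n => a n / n`!%:R.
Definition ex : ps K := egf (fun _ => 1).
Definition refl (f : ps K) : ps K := fun n => (-1) ^+ n * f n.

Lemma refl_mul f g : refl (f * g) = refl f * refl g.
Proof.
apply/funext=> n; rewrite /refl !psmulE !ps_mul_def mulr_sumr.
apply: eq_bigr => [[i hi]] _ /=.
rewrite mulrACA -exprD subnKC //.
Qed.

Lemma refl_add f g : refl (f + g) = refl f + refl g.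
Proof. by apply/funext=> n; rewrite /refl !psaddE mulrDr. Qed.

Lemma refl_one : refl 1 = 1.
Proof.
apply/funext=> n; rewrite /refl psoneE /ps_one; case: n => [|n] /=; first by rewrite mulr1.
by rewrite mulr0.
Qed.

Lemma one_coef n : (1 : ps K) n = (n == 0)%:R.
Proof. by []. Qed.

Lemma mulps_eq0 (d c : ps K) : d * c = 0 -> c 0%N != 0 -> d = 0.
Proof.
move=> e c0; apply/funext => n; elim/ltn_ind: n => n IH.
have := congr1 (fun f : ps K => f n) e; rewrite psmulE ps_mul_def big_ord_recr /= subnn.
rewrite big1 ?add0r; last by move=> [i hi] _ /=; rewrite IH // mul0r.
move=> /eqP; rewrite mulf_eq0 (negbTE c0) orbF => /eqP ->; by [].
Qed.

Lemma reflex_ex : refl ex * ex = 1.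
Proof.
apply/funext=> n; rewrite psmulE ps_mul_def one_coef /refl /ex /egf.
transitivity ((n`!%:R)^-1 * ((1 - 1) ^+ n : K)).
  rewrite exprBn mulr_sumr; apply: eq_bigr => [[i hi]] _ /=.
  rewrite !expr1n !mulr1 !mul1r -mulrA fact_splitK // mulrnAr -mulr_natr.
  by rewrite mul1r -mulr_natr; ring.
case: n => [|n]; first by rewrite expr0 mulr1 invr1.
by rewrite subrr expr0n mulr0.
Qed.

Definition Gs : ps K := egf en.

Lemma Gs_rec : Gs * (ex + 1) = 1 + 1.
Proof.
apply/funext=> n; rewrite mulrDr mulr1 !psaddE one_coef psmulE ps_mul_def.
transitivity ((\sum_(k < n.+1) 'C(n, k)%:R * en k + en n) / n`!%:R).
  rewrite /Gs /ex /egf mulrDl; congr (_ + _).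
  rewrite mulr_suml; apply: eq_bigr => [[i hi]] _ /=.
  by rewrite mul1r -mulrA fact_splitK //; ring.
case: n => [|n]; rewrite en_rec /=; first by rewrite invr1 !mulr1.
by rewrite !mulr0 mul0r addr0.
Qed.

Lemma Gs_refl : Gs * ex = refl Gs.
Proof.
have h : (Gs * ex - refl Gs) * (refl ex + 1) = 0.
  rewrite mulrBl -mulrA mulrDr mulr1 [ex * _]mulrC reflex_ex.
  have e1 : refl ex + 1 = refl (ex + 1) by rewrite refl_add refl_one.
  by rewrite e1 -refl_mul [1 + ex]addrC Gs_rec refl_add refl_one subrr.
apply/eqP; rewrite -subr_eq0; apply/eqP; apply: (mulps_eq0 h).
rewrite psaddE one_coef /refl /ex /egf /= expr0 !mul1r invr1.
by rewrite -(natrD _ 1 1) pnatr_eq0.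
Qed.

Lemma en_even m : en (m.+1.*2) = 0.
Proof.
have := Gs_rec; rewrite mulrDr mulr1 Gs_refl => /(congr1 (fun f : ps K => f (m.+1.*2))).
rewrite !psaddE one_coef /= /refl /Gs /egf -signr_odd odd_double expr0 mul1r.
rewrite addr0 => /eqP; rewrite -mulr2n mulrn_eq0 /= mulf_eq0 invr_eq0 (negbTE (factK_neq0 _)).
by rewrite orbF => /eqP.
Qed.

Lemma en_binsum M : \sum_(l < M.+1) 'C(M, l)%:R * en l = (-1) ^+ M * en M.
Proof.
have -> : \sum_(l < M.+1) 'C(M, l)%:R * en l = 2 * (M == 0)%:R - en M.
  by rewrite -(en_rec M) addrK.
case: M => [|M]; first by rewrite en0 expr0 mul1r /=; ring.
rewrite mulr0 sub0r -signr_odd.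
case: (boolP (odd M.+1)) => ho; first by rewrite expr1 mulN1r.
have [m em] : exists m, M.+1 = m.+1.*2.
  exists (M.+1)./2.-1; rewrite prednK; last by move: ho; case: M => // -[].
  by rewrite -{1}(odd_double_half M.+1) (negbTE ho).
by rewrite em en_even oppr0 mulr0.
Qed.


Lemma sign2 l : (-1) ^+ l * (-1) ^+ l = 1 :> K.
Proof. by rewrite -exprD -signr_odd addnn odd_double. Qed.

Lemma sum_widen (F : nat -> K) n m : (n <= m)%N ->
  (forall a, (n < a)%N -> (a <= m)%N -> F a = 0) ->
  \sum_(a < n.+1) F a = \sum_(a < m.+1) F a.
Proof.
move=> nm; elim: m nm => [|m IH]; first by rewrite leqn0 => /eqP ->.
rewrite leq_eqVlt => /orP [/eqP -> //|]; rewrite ltnS => nm F0.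
rewrite [RHS]big_ord_recr /= -IH //; last by move=> a na am; rewrite F0 // (leq_trans am).
by rewrite F0 ?addr0.
Qed.

Definition Sys (D : nat) (M : nat -> nat -> K) (x : nat -> K) :=
  forall n, (n <= D)%N -> x n = \sum_(i < n.+1) M n i * x i.

Lemma Sys_sub D M x y : Sys D M x -> Sys D M y -> Sys D M (fun n => x n - y n).
Proof.
move=> hx hy n hn; rewrite hx // hy // -sumrB; apply: eq_bigr => i _.
by rewrite mulrBr.
Qed.

Lemma Sys_unique D M (free : pred nat) x :
  Sys D M x -> (forall n, (n <= D)%N -> ~~ free n -> M n n = -1) ->
  (forall n, (n <= D)%N -> free n -> x n = 0) -> forall n, (n <= D)%N -> x n = 0.
Proof.
move=> hs hM hf n; elim/ltn_ind: n => n IH hn.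
case: (boolP (free n)) => fn; first exact: hf.
have := hs n hn; rewrite big_ord_recr /= big1 ?add0r; last first.
  by move=> [i hi] _ /=; rewrite IH ?mulr0 // (leq_trans (ltnW hi)).
rewrite hM // mulN1r => /eqP; rewrite -subr_eq0 opprK -mulr2n mulrn_eq0 /=.
by move/eqP.
Qed.

Lemma Sys_eq D M (free : pred nat) x y :
  Sys D M x -> Sys D M y -> (forall n, (n <= D)%N -> ~~ free n -> M n n = -1) ->
  (forall n, (n <= D)%N -> free n -> x n = y n) -> forall n, (n <= D)%N -> x n = y n.
Proof.
move=> hx hy hM hf n hn; apply/eqP; rewrite -subr_eq0; apply/eqP.
apply: (Sys_unique (Sys_sub hx hy) hM) => // m hm fm.
by rewrite hf // subrr.
Qed.

Lemma Sys_ext D M x y : (forall n, (n <= D)%N -> x n = y n) -> Sys D M x -> Sys D M y.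
Proof.
move=> e hx n hn; rewrite -e // hx //; apply: eq_bigr => [[i hi]] _ /=.
by rewrite e // (leq_trans _ hn).
Qed.


Definition fE l : K := (-1) ^+ l * en l.

Lemma keyH N a : (a <= N)%N ->
  \sum_(I < N.+1) (-1) ^+ I * 'C(N, I)%:R * ('C(I, a)%:R * fE (I - a)) =
  (-1) ^+ a * 'C(N, a)%:R * fE (N - a).
Proof.
move=> aN.
rewrite (@sum_shift (fun I => (-1) ^+ I * 'C(N, I)%:R * ('C(I, a)%:R * fE (I - a))) a N.+1)
   ?(leq_trans aN) //; last by move=> k ka; rewrite (@bin_small k a) // !(mul0r, mulr0).
transitivity ((-1) ^+ a * 'C(N, a)%:R * \sum_(l < N.+1 - a) 'C(N - a, l)%:R * en l).
  rewrite mulr_sumr; apply: eq_bigr => [[l hl]] _ /=.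
  have hal : (a + l <= N)%N by move: hl; rewrite subSn //; lia.
  have e1 : ('C(N, a + l) * 'C(a + l, a) = 'C(N, a) * 'C(N - a, l))%N.
    by rewrite binA ?leq_addr // addKn.
  rewrite addKn.
  transitivity ((-1) ^+ (a + l) * ('C(N, a + l) * 'C(a + l, a))%:R * fE l).
    by rewrite natrM; ring.
  rewrite e1 natrM /fE exprD; set u := (-1) ^+ l; set v := (-1) ^+ a.
  have h : u * u = 1 by rewrite sign2.
  transitivity (v * 'C(N, a)%:R * 'C(N - a, l)%:R * en l * (u * u)); first by ring.
  by rewrite h mulr1 !mulrA.
rewrite subSn // en_binsum /fE; ring.
Qed.

Definition MH (p : bool) (N I : nat) : K := (-1) ^+ p * ((-1) ^+ I * 'C(N, I)%:R).
Definition bt (p : bool) (b : nat -> K) N :=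
  \sum_(a < N.+1) (if odd a == p then b a * ('C(N, a)%:R * fE (N - a)) else 0).

Lemma bt_free p b N : odd N = p -> bt p b N = b N.
Proof.
move=> hN; rewrite /bt big_ord_recr /= hN eqxx binn subnn /fE en0 !mulr1.
rewrite big1 ?add0r // => [[a ha]] _ /=; case: ifP => // /eqP ho.
have [m em] : exists m, (N - a = m.+1.*2)%N.
  exists (N - a)./2.-1; rewrite prednK; last first.
    have : ~~ odd (N - a) by rewrite oddB ?(ltnW ha) // hN ho addbb.
    move: ha; rewrite -subn_gt0; case: (N - a)%N => // -[] //.
  have he : ~~ odd (N - a) by rewrite oddB ?(ltnW ha) // hN ho addbb.
  by rewrite -{1}(odd_double_half (N - a)) (negbTE he).
by rewrite em en_even !mulr0.
Qed.

Lemma bt_sys p b D : Sys D (MH p) (bt p b).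
Proof.
move=> N _.
have ext : forall I, (I <= N)%N -> bt p b I =
    \sum_(a < N.+1) (if odd a == p then b a * ('C(I, a)%:R * fE (I - a)) else 0).
  move=> I hI; rewrite /bt (@sum_widen (fun a => if odd a == p then b a * ('C(I, a)%:R * fE (I - a)) else 0) I N) //.
  by move=> a Ia _; rewrite bin_small // mul0r mulr0; case: ifP.
transitivity (\sum_(i < N.+1) MH p N i *
   \sum_(a < N.+1) (if odd a == p then b a * ('C(i, a)%:R * fE (i - a)) else 0)); last first.
  by apply: eq_bigr => [[i hi]] _ /=; rewrite ext.
rewrite /bt; under [RHS]eq_bigr do rewrite mulr_sumr.
rewrite [RHS]exchange_big /=; apply: eq_bigr => [[a ha]] _ /=.
case: ifP => ho; last by rewrite big1 // => i _; rewrite mulr0.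
transitivity (b a * ((-1) ^+ p * \sum_(i < N.+1) (-1) ^+ i * 'C(N, i)%:R * ('C(i, a)%:R * fE (i - a)))).
  rewrite keyH // -(eqP ho) signr_odd; congr (_ * _).
  by rewrite !mulrA sign2 mul1r.
rewrite mulr_sumr mulr_sumr; apply: eq_bigr => i _; rewrite /MH; ring.
Qed.


Definition Ta (D a i : nat) : K :=
  if (a <= i)%N then 'C(D - a, i - a)%:R * en (i - a) else 0.
Definition gt (D : nat) (g : nat -> K) n :=
  \sum_(a < n.+1) (if ~~ odd a then g a * Ta D a n else 0).
Definition ML (D n i : nat) : K := (-1) ^+ n * 'C(D - i, n - i)%:R.

Lemma gt_free D g n : ~~ odd n -> gt D g n = g n.
Proof.
move=> hn; rewrite /gt big_ord_recr /= hn /Ta leqnn subnn bin0 en0 !mulr1.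
rewrite big1 ?add0r // => [[a ha]] _ /=; case: ifP => // ho.
rewrite (ltnW ha).
have he : ~~ odd (n - a) by rewrite oddB ?(ltnW ha) // (negbTE hn) (negbTE ho).
have [m em] : exists m, (n - a = m.+1.*2)%N.
  exists (n - a)./2.-1; rewrite prednK; last first.
    move: he ha; rewrite -subn_gt0; case: (n - a)%N => // -[] //.
  by rewrite -{1}(odd_double_half (n - a)) (negbTE he).
by rewrite em en_even !mulr0.
Qed.

Lemma keyL D n a : (a <= n)%N -> (n <= D)%N ->
  \sum_(i < n.+1) 'C(D - i, n - i)%:R * Ta D a i =
  'C(D - a, n - a)%:R * ((-1) ^+ (n - a) * en (n - a)).
Proof.
move=> an nD.
rewrite (@sum_shift (fun i => 'C(D - i, n - i)%:R * Ta D a i) a n.+1) ?(leq_trans an) //;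
  last by move=> k ka; rewrite /Ta leqNgt ka mulr0.
transitivity ('C(D - a, n - a)%:R * \sum_(l < n.+1 - a) 'C(n - a, l)%:R * en l).
  rewrite mulr_sumr; apply: eq_bigr => [[l hl]] _ /=.
  have hal : (a + l <= n)%N by move: hl; rewrite subSn //; lia.
  rewrite /Ta leq_addr addKn.
  have e1 : ('C(D - a, n - a) * 'C(n - a, l) = 'C(D - a, l) * 'C(D - (a + l), n - (a + l)))%N.
    rewrite binA; last by lia.
      by congr (_ * 'C(_, _)); lia.
    by lia.
  transitivity (('C(D - a, l) * 'C(D - (a + l), n - (a + l)))%:R * en l); last first.
    by rewrite -e1 natrM mulrA.
  by rewrite natrM; ring.
by rewrite subSn // en_binsum.
Qed.

Lemma gt_sys D g : Sys D (ML D) (gt D g).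
Proof.
move=> n nD.
have ext : forall i, (i <= n)%N -> gt D g i =
    \sum_(a < n.+1) (if ~~ odd a then g a * Ta D a i else 0).
  move=> i hi; rewrite /gt (@sum_widen (fun a => if ~~ odd a then g a * Ta D a i else 0) i n) //.
  by move=> a ia _; rewrite /Ta leqNgt ia mulr0; case: ifP.
transitivity (\sum_(i < n.+1) ML D n i *
   \sum_(a < n.+1) (if ~~ odd a then g a * Ta D a i else 0)); last first.
  by apply: eq_bigr => [[i hi]] _ /=; rewrite ext.
rewrite /gt; under [RHS]eq_bigr do rewrite mulr_sumr.
rewrite [RHS]exchange_big /=; apply: eq_bigr => [[a ha]] _ /=.
case: ifP => ho; last by rewrite big1 // => i _; rewrite mulr0.
transitivity (g a * ((-1) ^+ n * \sum_(i < n.+1) 'C(D - i, n - i)%:R * Ta D a i)).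
  have ha' : (a <= n)%N by [].
  rewrite keyL // /Ta ha'; congr (_ * _).
  have hs : (-1) ^+ n = (-1) ^+ (n - a) :> K.
    by rewrite -{1}(subnKC ha') exprD -signr_odd (negbTE ho) expr0 mul1r.
  rewrite hs; have := sign2 (n - a); set u := (-1) ^+ (n - a) => h; transitivity (u * u * ('C(D - a, n - a)%:R * en (n - a))); [by rewrite h mul1r | ring].
rewrite mulr_sumr mulr_sumr; apply: eq_bigr => i _; rewrite /ML; ring.
Qed.


Notation u := (ps_1mX K).
Notation g := (ps_geom K).
Notation pw := (ps_1mX_pow K).

Lemma u_def : u = 1 - ps_X K.
Proof. by []. Qed.

Lemma mulX_coef f j : (ps_X K * f) j = if j is j'.+1 then f j' else 0.
Proof.
rewrite psmulE ps_mul_def; case: j => [|j].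
  by rewrite big_ord1 /ps_X /= mul0r.
rewrite big_ord_recl /ps_X /= mul0r add0r big_ord_recl /= mul1r subn1 /=.
by rewrite big1 ?addr0 // => i _; rewrite mul0r.
Qed.

Lemma ps_oppE f j : (- f) j = - f j.
Proof. by []. Qed.
Lemma ps_subE f h j : (f - h) j = f j - h j.
Proof. by []. Qed.

Lemma mulu_coef f j : (u * f) j = f j - (if j is j'.+1 then f j' else 0).
Proof. by rewrite u_def mulrBl mul1r ps_subE mulX_coef. Qed.

Lemma mulg_coef f j : (f * g) j = \sum_(i < j.+1) f i.
Proof. by rewrite psmulE ps_mul_def; apply: eq_bigr => i _; rewrite /ps_geom mulr1. Qed.

Lemma ug : u * g = 1.
Proof.
apply/funext=> j; rewrite mulg_coef one_coef; case: j => [|j].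
  by rewrite big_ord1 /ps_1mX /ps_one /ps_X /= subr0.
rewrite big_ord_recl big_ord_recl /= big1 ?addr0.
  by rewrite /ps_1mX /ps_one /ps_X /= subr0 sub0r subrr.
by move=> i _; rewrite /ps_1mX /ps_one /ps_X /bump /= subr0.
Qed.

Lemma pwE (a : int) : pw a = match a with Posz m => u ^+ m | Negz m => g ^+ m.+1 end.
Proof. by case: a => m; rewrite /ps_1mX_pow psexpE. Qed.

Lemma pw_succ (a : int) : pw (a + 1) = u * pw a.
Proof.
case: a => [m|m].
  by rewrite -[1]/(1%N : int) -PoszD addn1 !pwE -exprS.
case: m => [|m].
  have -> : Negz 0 + 1 = 0 by [].
  by rewrite !pwE /= expr1 ug.
have -> : Negz m.+1 + 1 = Negz m.
  by rewrite !NegzE; lia.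
by rewrite !pwE [g ^+ m.+2]exprS mulrA ug mul1r.
Qed.

Lemma pw_pred (a : int) : pw a = g * pw (a + 1).
Proof. by rewrite pw_succ mulrA [g * u]mulrC ug mul1r. Qed.

Lemma pw0 : pw 0 = 1.
Proof. by []. Qed.

Lemma pw_add (a b : int) : pw (a + b) = pw a * pw b.
Proof.
case: b => [n|n].
  elim: n => [|n IH]; first by rewrite addr0 pw0 mulr1.
  have -> : a + n.+1%:Z = (a + n) + 1 by lia.
  have -> : n.+1%:Z = n%:Z + 1 by lia.
  by rewrite !pw_succ IH mulrCA.
elim: n => [|n IH].
  rewrite (pw_pred (a + Negz 0)) (pw_pred (Negz 0)).
  have -> : a + Negz 0 + 1 = a by rewrite NegzE; lia.
  have -> : Negz 0 + 1 = 0 by [].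
  by rewrite pw0 mulr1 mulrC.
rewrite (pw_pred (a + Negz n.+1)) (pw_pred (Negz n.+1)).
have -> : a + Negz n.+1 + 1 = a + Negz n by rewrite !NegzE; lia.
have -> : Negz n.+1 + 1 = Negz n by rewrite !NegzE; lia.
by rewrite IH mulrCA.
Qed.


Lemma pw_pos_coef m j : pw (Posz m) j = (-1) ^+ j * 'C(m, j)%:R.
Proof.
elim: m j => [|m IH] j.
  by rewrite pw0 one_coef bin0n; case: j => [|j]; rewrite ?expr0 ?mulr1 ?mulr0.
rewrite pwE exprS -(pwE m) mulu_coef IH; case: j => [|j].
  by rewrite !bin0 subr0.
by rewrite IH binS natrD exprS; ring.
Qed.

Lemma pw_neg_coef m j : pw (Negz m) j = 'C(m + j, j)%:R.
Proof.
elim: m j => [|m IH] j.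
  by rewrite pwE expr1 /ps_geom add0n binn.
rewrite pwE exprS mulrC -(pwE (Negz m)) mulg_coef.
under eq_bigr do rewrite IH.
elim: j => [|j IHj]; first by rewrite big_ord1 !addn0 !bin0.
rewrite big_ord_recr /= IHj -natrD addnS addSn binS addnS.
by rewrite addnC.
Qed.

Lemma Xpow_coef i f n : (ps_X K ^+ i * f) n = if (i <= n)%N then f (n - i)%N else 0.
Proof.
elim: i f n => [|i IH] f n; first by rewrite expr0 mul1r subn0.
rewrite exprSr -mulrA IH; case: ifP => h; last first.
  by case: ifP => // h2; move: h h2; lia.
rewrite mulX_coef; case: (ltnP i n) => h2.
  have -> : (n - i = (n - i.+1).+1)%N by lia.
  by [].
have -> : (n - i = 0)%N by lia.
by [].
Qed.

Lemma sign_coef i f n : ((-1) ^+ i * f) n = (-1) ^+ i * f n.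
Proof.
elim: i => [|i IH]; first by rewrite !expr0 !mul1r.
by rewrite !exprS -!mulrA mulN1r ps_oppE IH mulN1r.
Qed.


Lemma gpow i : g ^+ i = pw (- i%:Z).
Proof.
case: i => [|i]; first by rewrite expr0.
by rewrite pwE; have -> : - (i.+1)%:Z = Negz i by rewrite NegzE.
Qed.

Lemma xdpow i : ps_exp (ps_xdiv K) i = (-1) ^+ i * (ps_X K ^+ i * g ^+ i).
Proof.
rewrite psexpE; have -> : ps_xdiv K = - (ps_X K * g) by [].
have -> : - (ps_X K * g) = (-1) * (ps_X K * g) by rewrite mulN1r.
by rewrite !exprMn.
Qed.

Lemma xdpow_coef i m : (ps_exp (ps_xdiv K) i) m = (-1) ^+ i * (if (i <= m)%N then pw (- i%:Z) (m - i)%N else 0).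
Proof. by rewrite xdpow sign_coef Xpow_coef gpow. Qed.

Lemma compQ (r : int) f n :
  (pw (- r) * ps_comp f (ps_xdiv K)) n =
  \sum_(i < n.+1) f i * ((-1) ^+ i * pw (- r - i%:Z) (n - i)%N).
Proof.
rewrite mulrC psmulE ps_mul_def.
have ext : forall m, (m <= n)%N -> ps_comp f (ps_xdiv K) m =
    \sum_(i < n.+1) f i * (ps_exp (ps_xdiv K) i) m.
  move=> m hm; rewrite /ps_comp (@sum_widen (fun i => f i * (ps_exp (ps_xdiv K) i) m) m n) //.
  by move=> a ma _; rewrite xdpow_coef leqNgt ma !mulr0.
transitivity (\sum_(m < n.+1) (\sum_(i < n.+1) f i * (ps_exp (ps_xdiv K) i) m) * pw (- r) (n - m)%N).
  by apply: eq_bigr => [[m hm]] _ /=; rewrite ext.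
under eq_bigr do rewrite mulr_suml.
rewrite exchange_big /=; apply: eq_bigr => [[i hi]] _ /=.
transitivity (f i * (ps_exp (ps_xdiv K) i * pw (- r)) n).
  by rewrite psmulE ps_mul_def mulr_sumr; apply: eq_bigr => m _; rewrite mulrA.
rewrite xdpow -!mulrA gpow -pw_add sign_coef Xpow_coef.
have -> : (i <= n)%N by [].
by rewrite addrC.
Qed.

Lemma inF_iff (r : int) f : in_F r f <->
  forall n, f n = \sum_(i < n.+1) f i * ((-1) ^+ i * pw (- r - i%:Z) (n - i)%N).
Proof.
split=> H.
  have HW : ps_comp f (ps_xdiv K) = pw r * f by apply/funext=> n; apply: H.
  move=> n; rewrite -compQ HW mulrA -pw_add addNr pw0 mul1r //.
have HW : f = pw (- r) * ps_comp f (ps_xdiv K) by apply/funext=> n; rewrite compQ -H.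
move=> n; rewrite -psmulE [in RHS]HW mulrA -pw_add addrN pw0 mul1r //.
Qed.


Lemma gZ_sub (f : ps K) (N E : nat) : gZ f (N%:Z - E%:Z) = if (E <= N)%N then f (N - E)%N else 0.
Proof.
case: leqP => h.
  by have -> : N%:Z - E%:Z = Posz (N - E)%N by lia.
by have -> : N%:Z - E%:Z = Negz (E - N).-1 by rewrite NegzE; lia.
Qed.

Definition SysAll (M : nat -> nat -> K) (x : nat -> K) :=
  forall N, x N = \sum_(I < N.+1) M N I * x I.

Definition bseq (r : int) (f : ps K) (N : nat) : K := gZ f (N%:Z + 1 - r).

Lemma decoupleA (E : nat) f : in_F (E.+1)%:Z f <-> SysAll (MH (odd E)) (bseq (E.+1)%:Z f).
Proof.
have hb : forall N, bseq (E.+1)%:Z f N = if (E <= N)%N then f (N - E)%N else 0.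
  by move=> N; rewrite /bseq -gZ_sub; congr gZ; lia.
have key : forall n, \sum_(I < (n + E).+1) MH (odd E) (n + E) I * bseq (E.+1)%:Z f I =
    \sum_(i < n.+1) f i * ((-1) ^+ i * pw (- (E.+1)%:Z - i%:Z) (n - i)%N).
  move=> n.
  rewrite (@sum_shift (fun I => MH (odd E) (n + E) I * bseq (E.+1)%:Z f I) E (n + E).+1);
    last by move=> k kE; rewrite hb leqNgt kE mulr0.
    2: by lia.
  have -> : ((n + E).+1 - E = n.+1)%N by lia.
  apply: eq_bigr => [[l hl]] _ /=.
  have -> : - (E.+1)%:Z - l%:Z = Negz (E + l) by rewrite NegzE; lia.
  rewrite pw_neg_coef hb leq_addr addKn /MH.
  have -> : (E + l + (n - l) = n + E)%N by lia.
  have -> : 'C(n + E, E + l) = 'C(n + E, n - l).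
    rewrite -bin_sub; last by lia.
    by congr 'C(_, _); lia.
  rewrite exprD.
  have hs : (-1) ^+ odd E * (-1) ^+ E = 1 :> K by rewrite signr_odd sign2.
  transitivity ((-1) ^+ odd E * (-1) ^+ E * ((-1) ^+ l * 'C(n + E, n - l)%:R * f l)); first by ring.
  by rewrite hs mul1r; ring.
rewrite inF_iff; split=> H N.
  case: (leqP E N) => hEN.
    have -> : N = ((N - E) + E)%N by rewrite subnK.
    by rewrite key hb leq_addl addnK H.
  rewrite hb leqNgt hEN big1 // => [[I hI]] _ /=; rewrite hb.
  case: ifP => h; last by rewrite mulr0.
  by exfalso; move: h hI hEN; lia.
by move: (H (N + E)%N); rewrite key hb leq_addl addnK.
Qed.


Lemma decoupleB (D0 : nat) f : in_F (- D0%:Z) f <->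
  SysAll (MH (~~ odd D0)) (bseq (- D0%:Z) f) /\ Sys D0 (ML D0) f.
Proof.
have hb : forall N, bseq (- D0%:Z) f N = f (N + D0).+1.
  by move=> N; rewrite /bseq; have -> : N%:Z + 1 - - D0%:Z = Posz (N + D0).+1 by lia.
have keyH : forall N, \sum_(i < (N + D0).+2) f i * ((-1) ^+ i * pw (- - D0%:Z - i%:Z) ((N + D0).+1 - i)%N)
   = \sum_(I < N.+1) MH (~~ odd D0) N I * bseq (- D0%:Z) f I.
  move=> N.
  rewrite (@sum_shift (fun i => f i * ((-1) ^+ i * pw (- - D0%:Z - i%:Z) ((N + D0).+1 - i)%N)) D0.+1 (N + D0).+2);
    last first.
      move=> k kD.
      have -> : - - D0%:Z - k%:Z = Posz (D0 - k)%N by lia.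
      rewrite pw_pos_coef bin_small ?mulr0 //; by lia.
    by lia.
  have -> : ((N + D0).+2 - D0.+1 = N.+1)%N by lia.
  apply: eq_bigr => [[l hl]] _ /=.
  have -> : - - D0%:Z - (D0.+1 + l)%N%:Z = Negz l by rewrite NegzE; lia.
  rewrite pw_neg_coef hb /MH.
  have -> : (l + ((N + D0).+1 - (D0.+1 + l)) = N)%N by lia.
  have -> : ((N + D0).+1 - (D0.+1 + l) = N - l)%N by lia.
  rewrite bin_sub; last by lia.
  have -> : (l + D0).+1 = (D0.+1 + l)%N by lia.
  rewrite exprD -[(-1) ^+ D0.+1]signr_odd oddS.
  by ring.
have keyL : forall n, (n <= D0)%N ->
   \sum_(i < n.+1) f i * ((-1) ^+ i * pw (- - D0%:Z - i%:Z) (n - i)%N) =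
   \sum_(i < n.+1) ML D0 n i * f i.
  move=> n nD; apply: eq_bigr => [[i hi]] _ /=.
  have -> : - - D0%:Z - i%:Z = Posz (D0 - i)%N by lia.
  rewrite pw_pos_coef /ML mulrA -exprD subnKC //; by ring.
rewrite inF_iff; split=> H.
  split; last by move=> n nD; rewrite -keyL // H.
  move=> N; rewrite hb -keyH; exact: H.
case: H => [HH HL] n; case: (leqP n D0) => h.
  by rewrite keyL // HL.
have -> : n = (n - D0.+1 + D0).+1 by lia.
by rewrite keyH -HH hb.
Qed.


Lemma HighEq p b : SysAll (MH p) b <-> forall N, odd N != p -> b N = bt p b N.
Proof.
have hM : forall D N, (N <= D)%N -> ~~ (odd N == p) -> MH p N N = -1.
  move=> D N _ h; rewrite /MH binn mulr1 -exprD -signr_odd oddD.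
  by move: h; case: p; case: (odd N).
split=> H.
  move=> N hN.
  have hx : Sys N (MH p) b by move=> n _; apply: H.
  apply: (@Sys_eq N (MH p) (fun a => odd a == p) b (bt p b) hx (@bt_sys p b N) (@hM N)) => //.
  by move=> n _ /eqP h; rewrite bt_free.


move=> N.
have e : forall n, (n <= N)%N -> bt p b n = b n.
  move=> n _; case: (boolP (odd n == p)) => h; first by rewrite bt_free //; apply/eqP.
  by rewrite H.
exact: (Sys_ext e (@bt_sys p b N)).
Qed.

Lemma LowEq D (f : ps K) : Sys D (ML D) f <-> forall n, (n <= D)%N -> odd n -> f n = gt D f n.
Proof.
have hM : forall N, (N <= D)%N -> ~~ ~~ odd N -> ML D N N = -1.
  by move=> N _; rewrite negbK /ML subnn bin0 mulr1 -signr_odd => ->.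
split=> H.
  move=> n hn hodd.
  apply: (@Sys_eq D (ML D) (fun a => ~~ odd a) f (gt D f) H (@gt_sys D f) hM) => //.
  by move=> m _ h; rewrite gt_free.
have e : forall n, (n <= D)%N -> gt D f n = f n.
  move=> n hn; case: (boolP (odd n)) => h; last by rewrite gt_free.
  by rewrite H.
exact: (Sys_ext e (@gt_sys D f)).
Qed.

Lemma sum_odd (F : nat -> K) m :
  \sum_(a < m.*2.+1) (if odd a then F a else 0) = \sum_(j < m) F j.*2.+1.
Proof.
elim: m => [|m IH]; first by rewrite big_ord1 big_ord0.
rewrite [RHS]big_ord_recr -IH doubleS big_ord_recr big_ord_recr /= odd_double /=.
by rewrite addr0.
Qed.

Lemma sum_even (F : nat -> K) m :
  \sum_(a < m.*2.+2) (if ~~ odd a then F a else 0) = \sum_(j < m.+1) F j.*2.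
Proof.
elim: m => [|m IH]; first by rewrite !big_ord_recr !big_ord0 /= !add0r addr0.
rewrite [RHS]big_ord_recr -IH doubleS big_ord_recr big_ord_recr /= odd_double /=.
by rewrite addr0.
Qed.


Lemma fE_odd l : odd l -> fE l = - en l.
Proof. by move=> h; rewrite /fE -signr_odd h expr1 mulN1r. Qed.

Lemma ebrackE (m t : nat) : ebrack K m%:Z t%:Z =
  if (0 < t <= m)%N then (brack_poly K m)`_(t.*2.-1) else 0.
Proof.
rewrite /ebrack; have -> : (1 <= t%:Z) && (t%:Z <= m%:Z) = (0 < t <= m)%N.
  by rewrite !lez_nat.
case: ifP => // /andP [h1 _]; congr (_ `_ _).
by case: t h1 => // t _; rewrite /=; lia.
Qed.

Lemma ebraceE (m t : nat) : ebrace K m%:Z t%:Z =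
  if (t <= m)%N then (brace_poly K m)`_(t.*2) else 0.
Proof.
rewrite /ebrace; have -> : (0 <= t%:Z) && (t%:Z <= m%:Z) = (t <= m)%N.
  by rewrite !lez_nat.
case: ifP => // _; congr (_ `_ _); lia.
Qed.

Lemma brack_coef m t : (0 < t <= m)%N ->
  (brack_poly K m)`_(t.*2.-1) = 'C(m.*2, t.*2.-1)%:R * fE (m.*2 - t.*2.-1).
Proof.
move=> /andP [h1 h2]; rewrite /brack_poly coefB coefXn.
have -> : (t.*2.-1 == m.*2) = false.
  by apply/negbTE; apply/eqP => e; move: (congr1 odd e); rewrite odd_double; case: t h1 {h2 e} => // t _; rewrite doubleS /= odd_double.
rewrite sub0r -/(ec (m.*2) (t.*2.-1)) ecE fE_odd ?mulrN //.
rewrite oddB; last by lia.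
by rewrite odd_double; case: t h1 {h2} => // t _; rewrite doubleS /= odd_double.
Qed.

Lemma brace_coef m t : (t <= m)%N ->
  (brace_poly K m)`_(t.*2) = 'C(m.*2.+1, t.*2)%:R * fE (m.*2.+1 - t.*2).
Proof.
move=> h; rewrite /brace_poly coefB coefXn.
have -> : (t.*2 == m.*2.+1) = false.
  by apply/negbTE; apply/eqP => e; move: (congr1 odd e); rewrite /= !odd_double.
rewrite sub0r -/(ec (m.*2.+1) (t.*2)) ecE fE_odd ?mulrN //.
rewrite oddB; last by lia.
by rewrite /= !odd_double.
Qed.

Lemma ebrack0 m : ebrack K m%:Z 0%:Z = 0.
Proof. by rewrite ebrackE. Qed.

Lemma bt_even (b : nat -> K) m :
  bt true b (m.*2) = \sum_(t < m.+1) ebrack K m%:Z t%:Z * b (t.*2.-1).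
Proof.
rewrite /bt.
under eq_bigr do rewrite eqb_id.
rewrite (@sum_odd (fun a => b a * ('C(m.*2, a)%:R * fE (m.*2 - a))) m) big_ord_recl ebrack0 mul0r add0r.
apply: eq_bigr => [[j hj]] _.
rewrite ebrackE; have -> : (lift ord0 (Ordinal hj) : nat) = j.+1 by [].
rewrite /= hj.
have h := @brack_coef m j.+1; rewrite doubleS /= in h.
by rewrite h ?hj // mulrC.
Qed.


Lemma bt_odd (b : nat -> K) m :
  bt false b (m.*2.+1) = \sum_(t < m.+1) ebrace K m%:Z t%:Z * b (t.*2).
Proof.
rewrite /bt.
under eq_bigr do rewrite eqbF_neg.
rewrite (@sum_even (fun a => b a * ('C(m.*2.+1, a)%:R * fE (m.*2.+1 - a))) m).
apply: eq_bigr => [[j hj]] _.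
by rewrite ebraceE /= -ltnS hj brace_coef // mulrC.
Qed.

Lemma gt_odd D (f : nat -> K) n : (n.*2.+1 <= D)%N ->
  gt D f (n.*2.+1) = \sum_(i < n.+1) 'C(D - i.*2, n.*2.+1 - i.*2)%:R * en (n.*2.+1 - i.*2) * f (i.*2).
Proof.
move=> hD; rewrite /gt (@sum_even (fun a => f a * Ta D a n.*2.+1) n).
apply: eq_bigr => [[i hi]] _ /=.
rewrite /Ta; have -> : (i.*2 <= n.*2.+1)%N by lia.
by rewrite mulrC.
Qed.


Lemma gZ_neg (f : ps K) (x : int) : x < 0 -> gZ f x = 0.
Proof. by case: x. Qed.

Lemma zsum_shift (k : int) (m : nat) (F : int -> K) :
  zsum (- k) (m%:Z - k) F = \sum_(t < m.+1) F (- k + t%:Z).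
Proof.
rewrite /zsum; have -> : (- k <= m%:Z - k) = true by apply/idP; lia.
have -> : absz (m%:Z - k - - k + 1) = m.+1 by lia.
by rewrite big_mkord.
Qed.

Lemma HighEven (k : int) (f : ps K) :
  SysAll (MH true) (bseq (2 * k) f) <->
  (forall n : int, 0 <= n -> - k <= n ->
     gZ f (2 * n + 1) =
     zsum (- k) n (fun i => ebrack K (n + k) (i + k) * gZ f (2 * i))).
Proof.
set b := bseq (2 * k) f.
have hterm : forall (m t : nat), ebrack K m%:Z t%:Z * b (t.*2.-1) =
    ebrack K ((m%:Z - k) + k) ((- k + t%:Z) + k) * gZ f (2 * (- k + t%:Z)).
  move=> m t; have -> : m%:Z - k + k = m%:Z by ring.
  have -> : - k + t%:Z + k = t%:Z by ring.
  case: t => [|t]; first by rewrite !ebrack0 !mul0r.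
  congr (_ * _); rewrite /b /bseq; congr gZ; rewrite doubleS /=; lia.
have hL : forall m : nat, b (m.*2) = gZ f (2 * (m%:Z - k) + 1).
  by move=> m; rewrite /b /bseq; congr gZ; lia.
have hnat : SysAll (MH true) b <-> forall m : nat, b (m.*2) = \sum_(t < m.+1) ebrack K m%:Z t%:Z * b (t.*2.-1).
  rewrite HighEq; split=> H.
    by move=> m; rewrite H ?odd_double // bt_even.
  move=> N hN; have hN' : ~~ odd N by move: hN; case: (odd N).
  have -> : N = (N./2).*2 by rewrite -{1}(odd_double_half N) (negbTE hN').
  by rewrite H bt_even.
rewrite hnat; split=> H.
  move=> n n0 nk.
  have [m hm] : exists m : nat, n = m%:Z - k by exists (absz (n + k)); lia.
  rewrite hm -hL H zsum_shift; apply: eq_bigr => [[t ht]] _ /=.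
  by rewrite hterm.
move=> m; case: (lerP k m%:Z) => hkm.
  rewrite hL H; [|lia|lia]; rewrite zsum_shift; apply: eq_bigr => [[t ht]] _ /=.
  by rewrite hterm.
rewrite hL gZ_neg; last by lia.
rewrite big1 // => [[t ht]] _; rewrite [nat_of_ord _]/=; case: t ht => [|t] ht; first by rewrite ebrack0 mul0r.
rewrite /b /bseq gZ_neg ?mulr0 //; rewrite doubleS /=; lia.
Qed.

Lemma HighOdd (k : int) (f : ps K) :
  SysAll (MH false) (bseq (2 * k + 1) f) <->
  (forall n : int, 0 <= n -> - k <= n ->
     gZ f (2 * n + 1) =
     zsum (- k) n (fun i => ebrace K (n + k) (i + k) * gZ f (2 * i))).
Proof.
set b := bseq (2 * k + 1) f.
have hterm : forall (m t : nat), ebrace K m%:Z t%:Z * b (t.*2) =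
    ebrace K ((m%:Z - k) + k) ((- k + t%:Z) + k) * gZ f (2 * (- k + t%:Z)).
  move=> m t; have -> : m%:Z - k + k = m%:Z by ring.
  have -> : - k + t%:Z + k = t%:Z by ring.
  congr (_ * _); rewrite /b /bseq; congr gZ; lia.
have hL : forall m : nat, b (m.*2.+1) = gZ f (2 * (m%:Z - k) + 1).
  by move=> m; rewrite /b /bseq; congr gZ; lia.
have hnat : SysAll (MH false) b <-> forall m : nat, b (m.*2.+1) = \sum_(t < m.+1) ebrace K m%:Z t%:Z * b (t.*2).
  rewrite HighEq; split=> H.
    by move=> m; rewrite H /= ?odd_double // bt_odd.
  move=> N hN; have hN' : odd N by move: hN; case: (odd N).
  have -> : N = (N./2).*2.+1 by rewrite -{1}(odd_double_half N) hN'.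
  by rewrite H bt_odd.
rewrite hnat; split=> H.
  move=> n n0 nk.
  have [m hm] : exists m : nat, n = m%:Z - k by exists (absz (n + k)); lia.
  rewrite hm -hL H zsum_shift; apply: eq_bigr => [[t ht]] _ /=.
  by rewrite hterm.
move=> m; case: (lerP k m%:Z) => hkm.
  rewrite hL H; [|lia|lia]; rewrite zsum_shift; apply: eq_bigr => [[t ht]] _ /=.
  by rewrite hterm.
rewrite hL gZ_neg; last by lia.
rewrite big1 // => [[t ht]] _ /=.
rewrite /b /bseq gZ_neg ?mulr0 //; lia.
Qed.


Lemma zsum0 (n : nat) (F : int -> K) : zsum 0 n%:Z F = \sum_(t < n.+1) F t%:Z.
Proof.
rewrite /zsum; have -> : (0 <= n%:Z) = true by apply/idP; lia.
have -> : absz (n%:Z - 0 + 1) = n.+1 by lia.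
by rewrite big_mkord; apply: eq_bigr => i _; rewrite add0r.
Qed.

Lemma LowGen D (w : nat -> nat -> K) (f : ps K) :
  (forall n t, (n.*2.+1 <= D)%N -> (t <= n)%N ->
     w n t = 'C(D - t.*2, n.*2.+1 - t.*2)%:R * en (n.*2.+1 - t.*2)) ->
  Sys D (ML D) f <-> forall n, (n.*2.+1 <= D)%N -> f (n.*2.+1) = \sum_(t < n.+1) w n t * f (t.*2).
Proof.
move=> hw; rewrite LowEq; split=> H.
  move=> n hn; rewrite H //= ?odd_double // gt_odd //.
  by apply: eq_bigr => [[t ht]] _ /=; rewrite hw.
move=> N hN hodd.
have e : N = (N./2).*2.+1 by rewrite -{1}(odd_double_half N) hodd.
move: hN; rewrite e => hN.
rewrite H // gt_odd //; apply: eq_bigr => [[t ht]] _ /=.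
by rewrite hw.
Qed.

Lemma LowEven (K0 : nat) (f : ps K) :
  Sys (K0.*2) (ML (K0.*2)) f <->
  (forall n : int, 0 <= n -> n <= - (- K0%:Z) - 1 ->
     gZ f (2 * n + 1) =
     zsum 0 n (fun i => - ebrack K (- (- K0%:Z) - i) (- (- K0%:Z) - n) * gZ f (2 * i))).
Proof.
set w := fun n t => - ebrack K (K0 - t)%N%:Z (K0 - n)%N%:Z.
have hw : forall n t, (n.*2.+1 <= K0.*2)%N -> (t <= n)%N ->
     w n t = 'C(K0.*2 - t.*2, n.*2.+1 - t.*2)%:R * en (n.*2.+1 - t.*2).
  move=> n t hn ht; rewrite /w ebrackE.
  have -> : (0 < K0 - n <= K0 - t)%N = true by apply/idP; lia.
  rewrite brack_coef; last by lia.
  have -> : ((K0 - t).*2 - (K0 - n).*2.-1 = n.*2.+1 - t.*2)%N by lia.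
  rewrite fE_odd; last first.
    have -> : (n.*2.+1 - t.*2 = (n - t).*2.+1)%N by lia.
    by rewrite /= odd_double.
  rewrite mulrN opprK.
  congr (_ * _); rewrite -bin_sub; last by lia.
  by congr ('C(_, _))%:R; lia.
rewrite (LowGen f hw); split=> H.
  move=> n n0 nK.
  have [m hm] : exists m : nat, n = m%:Z by exists (absz n); lia.
  rewrite hm zsum0.
  have -> : 2 * m%:Z + 1 = (m.*2.+1)%N%:Z by lia.
  rewrite [LHS]/gZ H; last by lia.
  apply: eq_bigr => [[t ht]] _ /=; rewrite /w.
  have -> : - - K0%:Z - t%:Z = (K0 - t)%N%:Z by lia.
  have -> : - - K0%:Z - m%:Z = (K0 - m)%N%:Z by lia.
  by congr (_ * f _); lia.
move=> n hn.
have h := H n%:Z (ltac:(lia)) (ltac:(lia)).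
rewrite zsum0 in h.
have e : 2 * n%:Z + 1 = (n.*2.+1)%N%:Z by lia.
rewrite e in h; rewrite [LHS]h.
apply: eq_bigr => [[t ht]] _; rewrite [nat_of_ord _]/= /w.
have -> : - - K0%:Z - t%:Z = (K0 - t)%N%:Z by lia.
have -> : - - K0%:Z - n%:Z = (K0 - n)%N%:Z by lia.
by congr (_ * _); have -> : 2 * t%:Z = (t.*2)%N%:Z by lia.
Qed.


Lemma LowOdd (M : nat) (f : ps K) :
  Sys (M.*2.+1) (ML (M.*2.+1)) f <->
  (forall n : int, 0 <= n -> n <= - (- M.+1%:Z) - 1 ->
     gZ f (2 * n + 1) =
     zsum 0 n (fun i => - ebrace K (- (- M.+1%:Z) - i - 1) (- (- M.+1%:Z) - n - 1) * gZ f (2 * i))).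
Proof.
set w := fun n t => - ebrace K (M - t)%N%:Z (M - n)%N%:Z.
have hw : forall n t, (n.*2.+1 <= M.*2.+1)%N -> (t <= n)%N ->
     w n t = 'C(M.*2.+1 - t.*2, n.*2.+1 - t.*2)%:R * en (n.*2.+1 - t.*2).
  move=> n t hn ht; rewrite /w ebraceE.
  have -> : (M - n <= M - t)%N = true by apply/idP; lia.
  rewrite brace_coef; last by lia.
  have -> : ((M - t).*2.+1 - (M - n).*2 = n.*2.+1 - t.*2)%N by lia.
  rewrite fE_odd; last first.
    have -> : (n.*2.+1 - t.*2 = (n - t).*2.+1)%N by lia.
    by rewrite /= odd_double.
  rewrite mulrN opprK.
  congr (_ * _); rewrite -bin_sub; last by lia.
  by congr ('C(_, _))%:R; lia.
rewrite (LowGen f hw); split=> H.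
  move=> n n0 nK.
  have [m hm] : exists m : nat, n = m%:Z by exists (absz n); lia.
  rewrite hm zsum0.
  have -> : 2 * m%:Z + 1 = (m.*2.+1)%N%:Z by lia.
  rewrite [LHS]/gZ H; last by lia.
  apply: eq_bigr => [[t ht]] _ /=; rewrite /w.
  have -> : - - M.+1%:Z - t%:Z - 1 = (M - t)%N%:Z by lia.
  have -> : - - M.+1%:Z - m%:Z - 1 = (M - m)%N%:Z by lia.
  by congr (_ * f _); lia.
move=> n hn.
have h := H n%:Z (ltac:(lia)) (ltac:(lia)).
rewrite zsum0 in h.
have e : 2 * n%:Z + 1 = (n.*2.+1)%N%:Z by lia.
rewrite e in h; rewrite [LHS]h.
apply: eq_bigr => [[t ht]] _; rewrite [nat_of_ord _]/= /w.
have -> : - - M.+1%:Z - t%:Z - 1 = (M - t)%N%:Z by lia.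
have -> : - - M.+1%:Z - n%:Z - 1 = (M - n)%N%:Z by lia.
by congr (_ * _); have -> : 2 * t%:Z = (t.*2)%N%:Z by lia.
Qed.

End PS.

Lemma Sys0 (K : numFieldType) (f : ps K) : Sys 0 (ML K 0) f.
Proof.
move=> n; rewrite leqn0 => /eqP ->; rewrite big_ord1 /ML /= expr0 mul1r.
by rewrite mul1r.
Qed.

Lemma evenCase (K : numFieldType) (gam : ps K) (k : int) :
  in_F (2 * k) gam <->
  ((forall n : int, 0 <= n -> - k <= n ->
         gZ gam (2 * n + 1) =
         zsum (- k) n (fun i => ebrack K (n + k) (i + k) * gZ gam (2 * i)))
      /\ (k < 0 -> forall n : int, 0 <= n -> n <= - k - 1 ->
         gZ gam (2 * n + 1) =
         zsum 0 n (fun i => - ebrack K (- k - i) (- k - n) * gZ gam (2 * i)))).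
Proof.
case: (lerP 1 k) => hk.
  set E := absz (2 * k - 1)%R.
  have eE : 2 * k = (E.+1)%:Z by rewrite /E; lia.
  have oE : odd E = true.
    have -> : E = ((absz k).-1).*2.+1 by rewrite /E; lia.
    by rewrite /= odd_double.
  rewrite {1}eE decoupleA oE -eE HighEven.
  split=> [H|[H _]] //; split=> // ?; lia.
set K0 := absz k.
have ek : k = - K0%:Z by rewrite /K0; lia.
have eD : 2 * k = - (K0.*2)%:Z by rewrite /K0; lia.
rewrite {1}eD decoupleB odd_double /= -eD HighEven.
split=> [[H1 H2]|[H1 H2]]; split=> //.
  by move=> hk0; rewrite ek; apply/LowEven.
case: (posnP K0) => hK0.
  by rewrite hK0 /=; apply: Sys0.
apply/LowEven; rewrite -ek; apply: H2; lia.
Qed.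

Lemma oddCase (K : numFieldType) (gam : ps K) (k : int) :
  in_F (2 * k + 1) gam <->
  ((forall n : int, 0 <= n -> - k <= n ->
         gZ gam (2 * n + 1) =
         zsum (- k) n (fun i => ebrace K (n + k) (i + k) * gZ gam (2 * i)))
      /\ (k < 0 -> forall n : int, 0 <= n -> n <= - k - 1 ->
         gZ gam (2 * n + 1) =
         zsum 0 n (fun i => - ebrace K (- k - i - 1) (- k - n - 1) * gZ gam (2 * i)))).
Proof.
case: (lerP 0 k) => hk.
  set E := absz (2 * k)%R.
  have eE : 2 * k + 1 = (E.+1)%:Z by rewrite /E; lia.
  have oE : odd E = false.
    have -> : E = (absz k).*2 by rewrite /E; lia.
    by rewrite odd_double.
  rewrite {1}eE decoupleA oE -eE HighOdd.
  split=> [H|[H _]] //; split=> // ?; lia.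
set M := (absz k).-1.
have ek : k = - M.+1%:Z by rewrite /M; lia.
have eD : 2 * k + 1 = - (M.*2.+1)%:Z by rewrite /M; lia.
rewrite {1}eD decoupleB /= odd_double /= -eD HighOdd.
split=> [[H1 H2]|[H1 H2]]; split=> //.
  by move=> hk0; rewrite ek; apply/LowOdd.
apply/LowOdd; rewrite -ek; apply: H2; lia.
Qed.

Unset Implicit Arguments.

Theorem theorem5p3 (K : numFieldType) (gam : ps K) (r : int) :
  in_F r gam <->
  ((forall k : int, r = 2 * k ->
      (forall n : int, 0 <= n -> - k <= n ->
         gZ gam (2 * n + 1) =
         zsum (- k) n (fun i => ebrack K (n + k) (i + k) * gZ gam (2 * i)))
      /\ (k < 0 -> forall n : int, 0 <= n -> n <= - k - 1 ->
         gZ gam (2 * n + 1) =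
         zsum 0 n (fun i => - ebrack K (- k - i) (- k - n) * gZ gam (2 * i))))
   /\
   (forall k : int, r = 2 * k + 1 ->
      (forall n : int, 0 <= n -> - k <= n ->
         gZ gam (2 * n + 1) =
         zsum (- k) n (fun i => ebrace K (n + k) (i + k) * gZ gam (2 * i)))
      /\ (k < 0 -> forall n : int, 0 <= n -> n <= - k - 1 ->
         gZ gam (2 * n + 1) =
         zsum 0 n (fun i => - ebrace K (- k - i - 1) (- k - n - 1) * gZ gam (2 * i))))).
Proof.
have [k [hk|hk]] : exists k : int, r = 2 * k \/ r = 2 * k + 1.
  exists (r %/ 2)%Z; lia.
- subst r; rewrite evenCase; split.
    move=> H; split; last by move=> k' ?; exfalso; lia.
    by move=> k' hk'; have -> : k' = k by lia.
  by move=> [H _]; apply: H.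
- subst r; rewrite oddCase; split.
    move=> H; split; first by move=> k' ?; exfalso; lia.
    by move=> k' hk'; have -> : k' = k by lia.
  by move=> [_ H]; apply: H.
Qed.
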